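(* For every integer $n\ge 5$, $$\mathrm{spt}2'_{do}(n)=p'_{do}(n-4)-p'_{do}(n-3)-p'_{do}(n-2).$$
   Context: For a partition $\pi$, $s(\pi)$ is its smallest part. $\mathrm{Spt}2_{do}(n)$ is the set of partitions $\pi$ of $n$ in which $s(\pi)$ occurs exactly twice and the remaining parts (those larger than $s(\pi)$) are pairwise distinct and each has parity different from that of $s(\pi)$. $\mathrm{spt}2'_{do}(n)$ is the number of such partitions having an even number of parts greater than $s(\pi)$ minus the number having an odd number of such parts. $p'_{do}(n)$ is the number of partitions of $n$ into distinct odd parts with an even number of parts minus the number with an odd number of parts, with $p'_{do}(0)=1$. *)

(* Defs.v *)
From mathcomp Require Import all_boot all_order all_algebra.
Set Implicit Arguments. Unset Strict Implicit. Unset Printing Implicit Defensive.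
Import GRing.Theory.
Local Open Scope ring_scope.

Definition is_partition (n : nat) (s : seq nat) : bool :=
  [&& sorted geq s, all (fun x => 0 < x)%N s & sumn s == n].

Fixpoint parts_le (fuel m n : nat) : seq (seq nat) :=
  match fuel with
  | 0%N => if n == 0%N then [:: [::]] else [::]
  | f.+1 =>
      if n == 0%N then [:: [::]]
      else flatten [seq [seq k :: s | s <- parts_le f k (n - k)]
                   | k <- iota 1 (minn m n)]
  end.

(* All partitions of n (a finite list; candidates are then filtered by is_partition
   so that the definition of the counted set is the predicate itself). *)
Definition partitions (n : nat) : seq (seq nat) :=
  [seq s <- undup (parts_le n n n) | is_partition n s].

(* smallest part (of a nonempty partition stored nonincreasingly) *)
Definition smallest (s : seq nat) : nat := last 0%N s.

Definition in_Spt2do (s : seq nat) : bool :=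
  let m := smallest s in
  let big := [seq x <- s | (m < x)%N] in
  [&& s != [::], count_mem m s == 2%N, uniq big
    & all (fun x => odd x != odd m) big].

Definition nbig (s : seq nat) : nat := count (fun x => smallest s < x)%N s.

Definition spt2do' (n : nat) : int :=
  \sum_(s <- partitions n | in_Spt2do s) (-1) ^+ nbig s.

Definition distinct_odd (s : seq nat) : bool := uniq s && all odd s.

Definition pdo' (n : nat) : int :=
  \sum_(s <- partitions n | distinct_odd s) (-1) ^+ size s.

(* Main.v *)
Require Import Defs.
From mathcomp Require Import all_boot all_order all_algebra.
From mathcomp Require Import zify ring.
Set Implicit Arguments. Unset Strict Implicit. Unset Printing Implicit Defensive.
Import GRing.Theory.

Fixpoint subs (ks : seq nat) : seq (seq nat) :=
  if ks is k :: ks' then [seq k :: t | t <- subs ks'] ++ subs ks' else [:: [::]].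

Lemma gtn_trans : transitive gtn.
Proof. by move=> y x z h1 h2; apply: ltn_trans h2 h1. Qed.

Lemma mem_subs ks : sorted gtn ks -> forall t,
  (t \in subs ks) = sorted gtn t && all (fun x => x \in ks) t.
Proof.
elim: ks => [|k ks IH] /= hs t.
  by rewrite inE; case: t => [|x t] /=; rewrite ?andbF.
have hs' : sorted gtn ks by case: ks hs {IH} => //= ? ? /andP[].
have hk : all (gtn k) ks.
  by move: hs; rewrite (path_sortedE gtn_trans) => /andP[].
rewrite mem_cat IH //.
apply/idP/idP.
  case/orP.
    case/mapP => t' ht' ->.
    rewrite IH // in ht'; case/andP: ht' => h1 h2.
    rewrite /= inE eqxx /= (path_sortedE gtn_trans) h1 andbT.
    apply/andP; split.
      apply/allP => x hx; move/allP: h2 => /(_ x hx) hx'.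
      by move/allP: hk => /(_ x hx').
    apply/allP => x hx; rewrite inE; move/allP: h2 => /(_ x hx) ->; exact: orbT.
  case/andP => h1 h2; rewrite h1 /=; apply/allP => x hx; rewrite inE.
  by move/allP: h2 => /(_ x hx) ->; rewrite orbT.
case: t => [|x t] /=.
  by rewrite orbT.
rewrite inE (path_sortedE gtn_trans) => /andP[/andP[hxt st]] /andP[hx hal].
have hal' : all (fun y => y \in ks) t.
  apply/allP => y hy; move/allP: hal => /(_ y hy); rewrite inE.
  case/orP => // /eqP ey.
  move/allP: hxt => /(_ y hy); rewrite ey /=.
  case/orP: hx => [/eqP -> | hx]; first by rewrite ltnn.
  by move/allP: hk => /(_ x hx) /= h1 h2; have := ltn_trans h1 h2; rewrite ltnn.
case/orP: hx => [/eqP ->|hx].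
  apply/orP; left; apply/mapP; exists t => //.
  by rewrite IH // st hal'.
apply/orP; right; by rewrite hxt st hx hal'.
Qed.

Lemma uniq_subs ks : sorted gtn ks -> uniq (subs ks).
Proof.
elim: ks => [|k ks IH] //= hs.
have hs' : sorted gtn ks by case: ks hs {IH} => //= ? ? /andP[].
have hk : all (gtn k) ks.
  by move: hs; rewrite (path_sortedE gtn_trans) => /andP[].
rewrite cat_uniq map_inj_uniq; last by move=> a b [].
rewrite IH //= andbT; apply/hasPn => t ht; apply/mapP => -[t' _ et].
move: ht; rewrite et mem_subs // => /andP[_] /= /andP[hkk _].
by move/allP: hk => /(_ k hkk); rewrite /= ltnn.
Qed.

Local Open Scope ring_scope.

Lemma prod_subs ks c :
  'X^c * \prod_(k <- ks) (1 - 'X^k) =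
  \sum_(t <- subs ks) ((-1) ^+ size t)%:P * 'X^(sumn t + c) :> {poly int}.
Proof.
elim: ks c => [|k ks IH] c /=.
  by rewrite big_nil big_cons big_nil !mulr1 addr0 add0n mul1r.
rewrite big_cons big_cat big_map /= mulrA mulrBr mulr1 mulrBl.
rewrite -exprD IH IH addrC; congr (_ + _).
rewrite -sumrN; apply: eq_bigr => t _.
rewrite exprS mulN1r polyCN mulNr; congr (- (_ * 'X^_)).
by rewrite (addnC c) addnA (addnC (sumn t)).
Qed.

Lemma coef_prod ks c n :
  ('X^c * \prod_(k <- ks) (1 - 'X^k) : {poly int})`_n =
  \sum_(t <- subs ks | (sumn t + c == n)%N) (-1) ^+ size t.
Proof.
rewrite prod_subs coef_sum [RHS]big_mkcond /=; apply: eq_bigr => t _.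
by rewrite coefCM coefXn eq_sym; case: eqP => _; rewrite ?mulr1 ?mulr0.
Qed.

Local Close Scope ring_scope.

Lemma geq_trans : transitive geq.
Proof. by move=> y x z h1 h2; apply: leq_trans h2 h1. Qed.

Lemma mem_le_sumn s x : x \in s -> x <= sumn s.
Proof.
elim: s => [|y s IH] //=; rewrite inE => /orP[/eqP->|/IH h].
  exact: leq_addr.
by apply: leq_trans h (leq_addl _ _).
Qed.

Lemma mem_parts_le f m n s :
  n <= f -> sorted geq s -> all (fun x => 0 < x) s -> all (fun x => x <= m) s ->
  sumn s = n -> s \in parts_le f m n.
Proof.
elim: f m n s => [|f IH] m n s hnf hs hpos hm hsum /=.
  have -> : n = 0 by move: hnf; rewrite leqn0 => /eqP.
  case: s hs hpos hm hsum => [|x s] //= _ /andP[hx _] _ hsum.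
  by move: hsum hnf => <-; rewrite leqn0 addn_eq0; case: x hx.
case: eqP => [n0|/eqP nn0].
  case: s hs hpos hm hsum => [|x s] //= _ /andP[hx _] _ hsum.
  by move: hsum; rewrite n0; move: hx; clear; lia.
case: s hs hpos hm hsum => [|x s] /=; first by move=> _ _ _ hn; case/eqP: nn0.
rewrite (path_sortedE geq_trans) => /andP[hxs ss] /andP[hx hp] /andP[hxm hm] hsum.
apply/flattenP; exists [seq x :: t | t <- parts_le f x (n - x)].
  apply/mapP; exists x => //; rewrite mem_iota hx /= add1n ltnS leq_min hxm.
  by rewrite -hsum leq_addr.
apply/mapP; exists s => //; apply: IH => //.
- by move: hnf hx hsum; clear; lia.
- by rewrite -hsum addKn.
Qed.

Lemma mem_partitions n s : (s \in partitions n) = is_partition n s.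
Proof.
rewrite mem_filter mem_undup; apply/andb_idr.
case/and3P => hs hp /eqP hn; apply: mem_parts_le => //.
apply/allP => x hx; rewrite -hn; exact: mem_le_sumn.
Qed.

Lemma uniq_partitions n : uniq (partitions n).
Proof. by rewrite filter_uniq ?undup_uniq. Qed.

Definition ks m K := [seq x <- rev (iota 1 K) | (m < x) && (odd x != odd m)].

Lemma sorted_ks m K : sorted gtn (ks m K).
Proof.
apply: (sorted_filter gtn_trans); rewrite rev_sorted; exact: iota_ltn_sorted.
Qed.

Lemma mem_ks m K x : (x \in ks m K) = [&& 0 < x, x <= K, m < x & odd x != odd m].
Proof.
rewrite mem_filter mem_rev mem_iota add1n ltnS.
by case: (m < x); case: (odd x != odd m); case: (0 < x); case: (x <= K).
Qed.

Local Open Scope ring_scope.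

Definition G K m : {poly int} := \prod_(x <- ks m K) (1 - 'X^x).

Lemma pdo_coef K k : (k <= K)%N -> pdo' k = (G K 0)`_k.
Proof.
move=> hk; rewrite /G -(mul1r (\prod_(x <- _) _)) -(expr0 ('X : {poly int})) coef_prod /pdo'.
rewrite -big_filter -[RHS]big_filter; apply: perm_big; apply: uniq_perm.
- by rewrite filter_uniq ?uniq_partitions.
- by rewrite filter_uniq ?uniq_subs ?sorted_ks.
move=> s; rewrite mem_filter mem_partitions mem_filter mem_subs ?sorted_ks //.
rewrite gtn_sorted_uniq_geq addn0 /distinct_odd /is_partition.
apply/idP/idP.
  case/andP=> /andP[hu ho] /and3P[hs hp /eqP hn].
  rewrite hn eqxx hu hs /=; apply/allP => x hx; rewrite mem_ks.
  move/allP: ho => /(_ x hx) ->; move/allP: hp => /(_ x hx) ->.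
  by rewrite (leq_trans (mem_le_sumn hx)) // hn.
case/and3P => /eqP hn /andP[hu hs] ha.
rewrite hu hs -hn eqxx /= andbT; apply/andP; split; apply/allP => x hx;
  by move/allP: ha => /(_ x hx); rewrite mem_ks => /and4P[h1 _ _ ho]; rewrite ?h1 //; move: ho; case: (odd x).
Qed.

Local Close Scope ring_scope.

Lemma last_min x s : sorted geq (x :: s) -> all (fun y => last x s <= y) (x :: s).
Proof.
elim: s x => [|y s IH] x /=; first by rewrite leqnn.
case/andP=> hxy hs; have := IH y hs => /= /andP[h1 h2].
by rewrite h1 h2 (leq_trans h1 hxy).
Qed.

Lemma split_sorted s m : sorted geq s -> all (fun x => m <= x) s ->
  s = [seq x <- s | m < x] ++ nseq (count_mem m s) m.
Proof.
elim: s => [|x s IH] //=.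
rewrite (path_sortedE geq_trans) => /andP[hxs ss] /andP[hmx hms].
have {}IH := IH ss hms.
case: ltnP => hlt.
  by rewrite /= {1}IH (gtn_eqF hlt).
have ex : x = m by apply/eqP; rewrite eqn_leq hlt hmx.
have hf : [seq y <- s | m < y] = [::].
  apply/eqP; rewrite -size_eq0 size_filter -leqn0 leqNgt -has_count; apply/hasPn => y hy.
  by move/allP: hxs => /(_ y hy) /=; rewrite -leqNgt ex.
by rewrite hf /= ex eqxx add1n /= {1}IH hf.
Qed.

Lemma sorted_cat_geq t u : sorted geq t -> sorted geq u ->
  (forall x y, x \in t -> y \in u -> y <= x) -> sorted geq (t ++ u).
Proof.
elim: t => [|x t IH] //= ht hu hxy.
rewrite !(path_sortedE geq_trans) in ht *; case/andP: ht => h1 h2.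
rewrite all_cat h1 /= IH //.
- by rewrite andbT; apply/allP => y hy; apply: hxy; rewrite ?inE ?eqxx.
- by move=> a b ha hb; apply: hxy; rewrite // inE ha orbT.
Qed.

Lemma spt_m K n m : (0 < m)%N -> (n <= K)%N ->
  (\sum_(s <- partitions n | in_Spt2do s && (smallest s == m)) (-1) ^+ nbig s =
  ('X^(2 * m) * G K m)`_n)%R.
Proof.
move=> m0 hnK; rewrite coef_prod.
have hnb : forall t, t \in subs (ks m K) -> nbig (t ++ [:: m; m]) = size t.
  move=> t; rewrite mem_subs ?sorted_ks // => /andP[_ ha].
  rewrite /nbig /smallest last_cat /= count_cat /= ltnn addn0.
  rewrite addn0; apply/eqP; rewrite -all_count; apply/allP => x hx.
  by move/allP: ha => /(_ x hx); rewrite mem_ks => /and4P[].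
rewrite -big_filter -[RHS]big_filter.
rewrite [RHS](eq_big_seq (fun t => (-1) ^+ nbig (t ++ [:: m; m]))%R); last first.
  by move=> t; rewrite mem_filter => /andP[_ ht]; rewrite hnb.
rewrite [RHS](_ : _ = \sum_(s <- [seq t ++ [:: m; m] | t <- [seq t <- subs (ks m K) | (sumn t + 2 * m)%N == n]]) (-1) ^+ nbig s)%R; last by rewrite big_map.
apply: perm_big; apply: uniq_perm.
- by rewrite filter_uniq ?uniq_partitions.
- rewrite map_inj_uniq ?filter_uniq ?uniq_subs ?sorted_ks //.
  by move=> a b e; apply: (rcons_injl m); apply: (rcons_injl m); rewrite -!cats1 -!catA.
move=> s; rewrite mem_filter mem_partitions; apply/idP/idP.
  case/andP => /andP[hin /eqP hm] /and3P[hs hp /eqP hn].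
  have s0 : s != [::] by case/and4P: hin.
  move: hin; rewrite /in_Spt2do /= hm => /and4P[_ /eqP hc hu hpar].
  have hall : all (fun x => m <= x)%N s.
    case: s s0 hs hm {hc hu hpar hp hn} => [|x s] // _ hs hm.
    by rewrite -hm; apply: last_min.
  have es := split_sorted hs hall; rewrite hc in es.
  apply/mapP; exists [seq x <- s | m < x]; last by [].
  rewrite mem_filter mem_subs ?sorted_ks // gtn_sorted_uniq_geq hu.
  rewrite (sorted_filter geq_trans) //=.
  apply/andP; split.
    by move: hn; rewrite {1}es sumn_cat /= => <-; apply/eqP; lia.
  apply/allP => x hx; rewrite mem_ks.
  move: (hx); rewrite mem_filter => /andP[-> hxs].
  move/allP: hpar => /(_ x hx) ->; move/allP: hp => /(_ x hxs) ->.
  by rewrite (leq_trans (mem_le_sumn hxs)) // hn.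
case/mapP => t; rewrite mem_filter => /andP[/eqP hn ht] ->.
move: (ht); rewrite mem_subs ?sorted_ks // gtn_sorted_uniq_geq.
case/andP => /andP[hu hs] ha.
have hgt : forall x, x \in t -> (m < x)%N.
  by move=> x hx; move/allP: ha => /(_ x hx); rewrite mem_ks => /and4P[].
have hsm : smallest (t ++ [:: m; m]) = m by rewrite /smallest last_cat.
have hft : [seq x <- t ++ [:: m; m] | (m < x)%N] = t.
  by rewrite filter_cat /= ltnn cats0; apply/all_filterP/allP.
rewrite /in_Spt2do /= hsm hft eqxx andbT /is_partition.
have hmt : count_mem m t = 0%N.
  by apply/count_memPn/negP => /hgt; rewrite ltnn.
rewrite count_cat hmt /= eqxx hu /=.
apply/and4P; split.
- apply/andP; split; first by case: t {ht hn ha hgt hft hmt hu hs hsm}.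
  apply/allP => x hx; move/allP: ha => /(_ x hx); rewrite mem_ks => /and4P[_ _ _].
  by rewrite eq_sym.
- apply: sorted_cat_geq => //=; first by rewrite leqnn.
  move=> x y hx; rewrite !inE orbb => /eqP ->; exact/ltnW/hgt.
- rewrite all_cat /= m0 !andbT.
  by apply/allP => x hx; move/allP: ha => /(_ x hx); rewrite mem_ks => /and4P[].
- by rewrite sumn_cat /= -hn; apply/eqP; lia.
Qed.

Lemma spt_decomp K J n : (n <= 2 * J)%N -> (n <= K)%N ->
  spt2do' n = (\sum_(m <- iota 1 (2 * J)) ('X^(2 * m) * G K m)`_n)%R.
Proof.
move=> hnJ hnK.
rewrite [RHS](eq_big_seq (fun m => \sum_(s <- partitions n | in_Spt2do s && (smallest s == m)) (-1) ^+ nbig s)%R); last first.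
  by move=> m; rewrite mem_iota => /andP[hm _]; rewrite (spt_m (K := K)).
rewrite /spt2do'.
under [RHS]eq_bigr do rewrite big_mkcondr.
rewrite [RHS]exchange_big /= big_seq_cond [RHS]big_seq_cond.
apply: eq_bigr => s /andP[hsP hQ].
rewrite -big_mkcond -big_filter.
have s0 : s != [::] by case/and4P: hQ.
move: hsP; rewrite mem_partitions => /and3P[_ hp /eqP hn].
have hsm : smallest s \in s by case: s s0 {hQ hp hn} => // x s _; exact: mem_last.
rewrite (eq_filter (a2 := pred1 (smallest s))); last by move=> y; rewrite /= eq_sym.
rewrite filter_pred1_uniq ?iota_uniq ?big_seq1 // mem_iota.
move/allP: hp => /(_ _ hsm) /= -> /=; rewrite add1n ltnS.
by rewrite (leq_trans (mem_le_sumn hsm)) // hn.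
Qed.

Local Open Scope ring_scope.

Lemma iota_split (R : nmodType) (f : nat -> R) J :
  \sum_(m <- iota 1 (2 * J)) f m =
  \sum_(0 <= j < J) f (2 * j + 1)%N + \sum_(0 <= j < J) f (2 * j + 2)%N.
Proof.
elim: J => [|J IH]; first by rewrite !big_nil addr0.
rewrite mulnS addnC iotaD big_cat IH !big_nat_recr //= big_cons big_cons big_nil.
rewrite addr0 -!addrA; congr (_ + _); rewrite addrC -!addrA; congr (_ + _).
  by congr f; rewrite add1n addnC.
rewrite addrC; congr (_ + _); congr f.
by rewrite add1n addnC addSn.
Qed.

Lemma G_rec K m : (m.+1 <= K)%N -> G K m = (1 - 'X^(m.+1)) * G K m.+2.
Proof.
move=> hm; rewrite /G (bigD1_seq (m.+1)); last 2 first.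
- by rewrite mem_ks /= hm ltnSn; case: (odd m).
- by rewrite filter_uniq ?rev_uniq ?iota_uniq.
congr (_ * _); rewrite /ks [LHS]big_filter_cond [RHS]big_filter; apply: eq_bigl => x.
rewrite /= negbK.
case: (ltngtP m.+2 x) => h.
- by rewrite (ltn_trans (ltnSn m) (ltn_trans (ltnSn _) h)) (gtn_eqF (ltn_trans (ltnSn _) h)) andbT.
- have : (x <= m.+1)%N by [].
  rewrite leq_eqVlt ltnS => /orP[/eqP ->|hx]; first by rewrite eqxx !andbF.
  by rewrite ltnNge hx.
- by rewrite -h /= negbK eqxx !andbF.
Qed.

Lemma G_top K m : (K <= m)%N -> G K m = 1.
Proof.
move=> hK; rewrite /G big_seq big1 // => x; rewrite mem_ks => /and4P[_ h1 h2 _].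
by move: (leq_trans h2 (leq_trans h1 hK)); rewrite ltnn.
Qed.

Lemma sumB (R : comNzRingType) (x : R) (t : nat -> R) J :
  (forall j, (j <= J)%N -> t j = (1 - x ^+ (2 * j + 1)) * t j.+1) ->
  \sum_(0 <= j < J) x ^+ (4 * j + 4) * t j.+1 =
  - (x ^+ 2 + x ^+ 3 - x ^+ 4) * t 0%N
  + (x ^+ 2 - x ^+ 4 + x ^+ (2 * J + 5) - x ^+ (4 * J + 4)) * t J.+1.
Proof.
elim: J => [|J IH] ht.
  rewrite big_nil (ht 0%N) //; ring.
rewrite big_nat_recr //= IH; last by move=> j hj; apply: ht; rewrite (leq_trans hj).
rewrite (ht J.+1) //.
have E : forall a b, x ^+ (a * J + b) = (x ^+ J) ^+ a * x ^+ b.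
  by move=> a b; rewrite exprD mulnC exprM.
rewrite (_ : (2 * J.+1 + 1 = 2 * J + 3)%N); last by lia.
rewrite (_ : (2 * J.+1 + 5 = 2 * J + 7)%N); last by lia.
rewrite (_ : (4 * J.+1 + 4 = 4 * J + 8)%N); last by lia.
rewrite !E; ring.
Qed.

Lemma sumA (R : comNzRingType) (x : R) (u : nat -> R) J :
  (forall j, (j < J)%N -> u j = (1 - x ^+ (2 * j + 2)) * u j.+1) ->
  \sum_(0 <= j < J) x ^+ (4 * j + 2) * u j =
  (x ^+ 2 - x ^+ 4 + x ^+ (2 * J + 4) - x ^+ (4 * J + 2)) * u J.
Proof.
elim: J => [|J IH] hu.
  rewrite big_nil; ring.
rewrite big_nat_recr //= IH; last by move=> j hj; apply: hu; rewrite (ltn_trans hj).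
rewrite (hu J) //.
have E : forall a b, x ^+ (a * J + b) = (x ^+ J) ^+ a * x ^+ b.
  by move=> a b; rewrite exprD mulnC exprM.
rewrite (_ : (2 * J.+1 + 4 = 2 * J + 6)%N); last by lia.
rewrite (_ : (4 * J.+1 + 2 = 4 * J + 6)%N); last by lia.
rewrite !E; ring.
Qed.

Theorem corollary8 (n : nat) (hn : (5 <= n)%N) :
  spt2do' n = pdo' (n - 4) - pdo' (n - 3) - pdo' (n - 2).
Proof.
set K := (2 * n + 1)%N.
rewrite (@spt_decomp K n n) ?leq_pmull ?leq_addr //; last by rewrite /K; lia.
rewrite -coef_sum iota_split.
rewrite (eq_bigr (fun j => 'X^(4 * j + 2) * G K (2 * j + 1))); last first.
  by move=> j _; congr ('X^_ * _); lia.
rewrite [X in _ + X](eq_bigr (fun j => 'X^(4 * j + 4) * (fun i => G K (2 * i)) j.+1)); last first.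
  by move=> j _ /=; congr ('X^_ * G K _); lia.
rewrite (@sumA _ _ (fun j => G K (2 * j + 1))); last first.
  move=> j hj; rewrite G_rec; last by rewrite /K; lia.
  by congr (_ * _); [congr (1 - 'X^_)| congr (G K _)]; lia.
rewrite (@sumB _ _ (fun i => G K (2 * i))); last first.
  move=> j hj; rewrite G_rec; last by rewrite /K; lia.
  by congr (_ * _); [congr (1 - 'X^_)| congr (G K _)]; lia.
rewrite /= (@G_top K (2 * n + 1)) ?(@G_top K (2 * n.+1)) ?mulr1; try by rewrite /K; lia.
rewrite mulNr !mulrDl !mulNr muln0.
rewrite !(coefD, coefB, coefN, coefXn, coefXnM).
rewrite !(pdo_coef (K := K)); try by rewrite /K; lia.
have h1 : (n < 2)%N = false by lia.
have h2 : (n < 3)%N = false by lia.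
have h3 : (n < 4)%N = false by lia.
have e2 : (n == 2)%N = false by lia.
have e4 : (n == 4)%N = false by lia.
have e5 : (n == 2 * n + 4)%N = false by lia.
have e6 : (n == 4 * n + 2)%N = false by lia.
have e7 : (n == 2 * n + 5)%N = false by lia.
have e8 : (n == 4 * n + 4)%N = false by lia.
rewrite h1 h2 h3 e2 e4 e5 e6 e7 e8 /=.
ring.
Qed.
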